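(* Let $G$ be a finite graph, $F$ a normal spanning forest of $G$, $x$ a vertex of $G$, and $B\subseteq\mathrm{Pred}_F(x)$. Let $p,d\in\mathbb{N}$. (a) If $|B|\ge p$ and there are $p$ distinct immediate successors $y$ of $x$ in $F$ with $B_F(y)=B\cup\{x\}$, then $K_{p,p}$ is a minor of $G$. (b) If $|B|<p$ and $\mathrm{Sep}(G,p)\le d$, then there are at most $d$ immediate successors $y$ of $x$ in $F$ with $B_F(y)=B\cup\{x\}$.
   Context: Graphs are finite, simple, undirected. A spanning forest $F$ of $G$ is a rooted forest on the vertex set of $G$ using edges of $G$, with edges oriented away from the roots; its tree-order is $x\preceq_F y$ iff some path from a root to $y$ contains $x$; immediate successors of $x$ are the children of $x$ in $F$. $F$ is normal if the two ends of every edge of $G$ are $\preceq_F$-comparable. $\mathrm{Pred}_F(x)=\{y: y\prec_F x\}$. $B_F(x)=\{v\prec_F x : \text{there is an edge }(u,v)\text{ of }G\text{ with }x\preceq_F u\}$. $\mathrm{Sep}(G,k)$ is the maximum over vertex sets $S$ with $|S|\le k$ of the number of connected components of $G-S$. *)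

(* Defs.v *)
From mathcomp Require Import all_boot.
Set Implicit Arguments. Unset Strict Implicit. Unset Printing Implicit Defensive.

Definition simple_graph (T : finType) (e : rel T) : Prop :=
  symmetric e /\ irreflexive e.

Definition induced (T : finType) (e : rel T) (A : {set T}) : rel T :=
  [rel u v | [&& e u v, u \in A & v \in A]].

Definition connected_in (T : finType) (e : rel T) (A : {set T}) : Prop :=
  forall u v, u \in A -> v \in A -> connect (induced e A) u v.

Definition minor (T : finType) (e : rel T) (U : finType) (h : rel U) : Prop :=
  exists f : U -> {set T},
    [/\ forall a, f a != set0,
        forall a b, a != b -> [disjoint f a & f b],
        forall a, connected_in e (f a) &
        forall a b, h a b -> exists u v, [/\ u \in f a, v \in f b & e u v]].

Definition Kpp_rel (p : nat) : rel ('I_p + 'I_p) :=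
  fun a b => match a, b with
             | inl _, inr _ | inr _, inl _ => true
             | _, _ => false
             end.

Definition ncomp_minus (T : finType) (e : rel T) (S : {set T}) : nat :=
  n_comp (induced e (~: S)) (mem (~: S)).

Definition Sep (T : finType) (e : rel T) (k : nat) : nat :=
  \max_(S : {set T} | #|S| <= k) ncomp_minus e S.

(* A rooted spanning forest, given by its parent map (None at roots).
   The forest uses edges of G, and is acyclic (every vertex reaches a root). *)
Definition parent_step (T : finType) (par : T -> option T) : rel T :=
  fun u w => par u == Some w.

Definition spanning_forest (T : finType) (e : rel T) (par : T -> option T) : Prop :=
  (forall x y, par x = Some y -> e y x) /\
  (forall x, exists n, iter n (fun o => obind par o) (Some x) = None).

(* Tree order: x <=_F y iff x lies on the root-to-y path, i.e. x is reached
   from y by following parent pointers (0 or more times). *)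
Definition tle (T : finType) (par : T -> option T) (x y : T) : bool :=
  connect (parent_step par) y x.

Definition tlt (T : finType) (par : T -> option T) (x y : T) : bool :=
  (x != y) && tle par x y.

Definition normal_forest (T : finType) (e : rel T) (par : T -> option T) : Prop :=
  spanning_forest e par /\
  (forall u v, e u v -> tle par u v || tle par v u).

Definition Pred (T : finType) (par : T -> option T) (x : T) : {set T} :=
  [set y | tlt par y x].

Definition BF (T : finType) (e : rel T) (par : T -> option T) (x : T) : {set T} :=
  [set v | tlt par v x && [exists u, tle par x u && e u v]].

(* Main.v *)
Require Import Defs.
From mathcomp Require Import all_boot.
Set Implicit Arguments. Unset Strict Implicit. Unset Printing Implicit Defensive.

Lemma connect_inv (T:finType) (r: rel T) (P: T -> Prop) u v :
  (forall a b, P a -> r a b -> P b) -> P u -> connect r u v -> P v.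
Proof.
move=> H Pu /connectP [p pth ->]; elim: p u Pu pth => //= z p IH u Pu /andP [ruz pz].
exact: IH (H _ _ Pu ruz) pz.
Qed.

Definition gpar (T : finType) (par : T -> option T) := fun o => obind par o.

Lemma exP_conv (T : finType) (par : T -> option T)
  (H : forall x, exists n, iter n (fun o => obind par o) (Some x) = None) x :
  exists n, (fun n => iter n (fun o => obind par o) (Some x) == None) n.
Proof. by case: (H x) => n Hn; exists n; apply/eqP. Qed.

Definition hgt (T : finType) (par : T -> option T)
  (H : forall x, exists n, iter n (fun o => obind par o) (Some x) = None) (x : T) : nat :=
  ex_minn (exP_conv H x).

Lemma hgt_step (T : finType) (par : T -> option T) H u w :
  par u = Some w -> @hgt T par H w < @hgt T par H u.
Proof.
move=> Hu; rewrite /hgt.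
case: ex_minnP => m Hm Hmin.
case: ex_minnP => m' Hm' Hmin'.
case: m' Hm' Hmin' => [|m'] /=; first by [].
move=> Hm' _; rewrite ltnS; apply: Hmin.
by move: Hm'; rewrite -iterS iterSr /= Hu.
Qed.

Lemma tle_hgt (T : finType) (par : T -> option T) H a b :
  tle par a b -> a = b \/ @hgt T par H a < @hgt T par H b.
Proof.
rewrite /tle => /connectP [p pth ->].
elim: p b pth => [|z p IH] b /=; first by left.
case/andP => /eqP sbz pz; right.
have h1 := hgt_step H sbz.
by case: (IH z pz) => [->|]; [|move/ltn_trans; apply].
Qed.

Lemma tle_antisym (T : finType) (par : T -> option T)
  (H : forall x, exists n, iter n (fun o => obind par o) (Some x) = None) a b :
  tle par a b -> tle par b a -> a = b.
Proof.
move=> h1 h2; case: (tle_hgt H h1) => // l1; case: (tle_hgt H h2) => // l2.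
by have := ltn_trans l1 l2; rewrite ltnn.
Qed.

Lemma par_tle (T : finType) (par : T -> option T) x y :
  par y = Some x -> tle par x y.
Proof. by move=> h; apply: connect1; rewrite /parent_step h. Qed.

Lemma tle_refl (T : finType) (par : T -> option T) x : tle par x x.
Proof. exact: connect0. Qed.

Lemma tle_trans (T : finType) (par : T -> option T) x y z :
  tle par x y -> tle par y z -> tle par x z.
Proof. by rewrite /tle => h1 h2; apply: connect_trans h2 h1. Qed.

Lemma connect_next (T : finType) (par : T -> option T) u w z :
  connect (parent_step par) u w -> par u = Some z ->
  u = w \/ connect (parent_step par) z w.
Proof.
move=> /connectP [[|z' p] /= pth ->] Hu; first by left.
case/andP: pth => /eqP; rewrite Hu => -[<-] pz; right.
by apply/connectP; exists p.
Qed.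

Lemma chain (T : finType) (par : T -> option T) u a b :
  connect (parent_step par) u a -> connect (parent_step par) u b ->
  connect (parent_step par) a b \/ connect (parent_step par) b a.
Proof.
move=> /connectP [p pth ->]; elim: p u pth => [|z p IH] u /=.
  by move=> _ hb; left.
case/andP => /eqP hz pz hb.
case: (connect_next hb hz) => [<-|hzb].
  right; apply/connectP; exists (z :: p) => //=; rewrite pz andbT; exact/eqP.
exact: IH pz hzb.
Qed.

Lemma sib (T : finType) (par : T -> option T)
  (H : forall x, exists n, iter n (fun o => obind par o) (Some x) = None) x y1 y2 :
  par y1 = Some x -> par y2 = Some x -> tle par y1 y2 -> y1 = y2.
Proof.
move=> h1 h2 t; case: (connect_next t h2) => [->//|hx].
have ex : x = y1 := tle_antisym H (par_tle h1) hx.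
have := hgt_step H h1; rewrite -ex ltnn => //.
Qed.
Lemma noself (T : finType) (par : T -> option T)
  (H : forall x, exists n, iter n (fun o => obind par o) (Some x) = None) x :
  par x = Some x -> False.
Proof. by move=> h; have := hgt_step H h; rewrite ltnn. Qed.

Lemma induced_sym (T : finType) (e : rel T) A : symmetric e -> symmetric (induced e A).
Proof. by move=> hs u v; rewrite /induced /= hs; congr (_ && _); exact: andbC. Qed.

Lemma sub_conn (T : finType) (e : rel T) (par : T -> option T) y u :
  symmetric e -> (forall x y, par x = Some y -> e y x) -> tle par y u ->
  connect (induced e [set w | tle par y w]) u y.
Proof.
move=> hs hf; rewrite /tle => /connectP [p pth ->].
elim: p u pth => [|z p IH] u /=; first by move=> _; exact: connect0.
case/andP => /eqP hz pz.
apply: connect_trans (IH _ pz); apply: connect1.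
rewrite /induced /= !inE hs (hf _ _ hz) /=.
apply/andP; split; apply/connectP; [exists (z :: p) | exists p] => //=.
by rewrite pz andbT /parent_step hz.
Qed.

Unset Implicit Arguments.

Theorem lemma4p11 (T : finType) (e : rel T) (par : T -> option T)
  (x : T) (B : {set T}) (p d : nat) :
  simple_graph e -> normal_forest e par -> B \subset Pred par x ->
  ((p <= #|B| ->
    (exists Y : {set T}, #|Y| = p /\
       forall y, y \in Y -> par y = Some x /\ BF e par y = B :|: [set x]) ->
    minor e (@Kpp_rel p))
  /\
  (#|B| < p -> Sep e p <= d ->
    #|[set y | (par y == Some x) && (BF e par y == B :|: [set x])]| <= d)).
Proof.
move=> [Hsym _] [[Hfe Hacyc] Hnorm] HB.
have symI : forall A, connect_sym (induced e A).
  by move=> A; apply: sym_connect_sym; apply: induced_sym.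
have Bx : forall b, b \in B -> tle par b x /\ b != x.
  move=> b /(subsetP HB); rewrite inE /tlt => /andP [h1 h2]; by split.
have disjP : forall (A C : {set T}), (forall u, u \in A -> u \in C -> False) -> [disjoint A & C].
  move=> A C h; rewrite -setI_eq0; apply/eqP/setP => u; rewrite !inE.
  by apply/negbTE/negP => /andP [] /h hh /hh.
split.
- move=> HpB [Y [HY HYp]].
  pose yv := fun i : 'I_p => @enum_val _ (mem Y) (cast_ord (esym HY) i).
  pose bv := fun j : 'I_p => @enum_val _ (mem B) (widen_ord HpB j).
  have Hyv : forall i, par (yv i) = Some x /\ BF e par (yv i) = B :|: [set x].
    by move=> i; apply: HYp; apply: enum_valP.
  have yinj : injective yv by move=> i i' /enum_val_inj /cast_ord_inj.
  have binj : injective bv.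
    by move=> j j' /enum_val_inj /(congr1 val) /= /val_inj.
  have bB : forall j, bv j \in B by move=> j; apply: enum_valP.
  exists (fun a => match a with inl i => [set u | tle par (yv i) u]
                              | inr j => [set bv j] end).
  split.
  + case=> [i|j]; apply/set0Pn; [exists (yv i); rewrite inE tle_refl //
                                 | exists (bv j); rewrite set11 //].
  + case=> [i|j] [i'|j'] Hne; apply: disjP => u; rewrite !inE.
    * move=> h1 h2; case: (chain h1 h2) => hc.
      - have := sib Hacyc (proj1 (Hyv i')) (proj1 (Hyv i)) hc.
        by move/yinj => ee; move: Hne; rewrite ee eqxx.
      - have := sib Hacyc (proj1 (Hyv i)) (proj1 (Hyv i')) hc.
        by move/yinj => ee; move: Hne; rewrite ee eqxx.
    * move=> h1 /eqP ee; subst u.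
      case: (Bx _ (bB j')) => hb _.
      have ex := tle_antisym Hacyc (tle_trans h1 hb) (par_tle (proj1 (Hyv i))).
      by move: (proj1 (Hyv i)); rewrite -ex => /(noself Hacyc).
    * move=> /eqP ee h1; subst u.
      case: (Bx _ (bB j)) => hb _.
      have ex := tle_antisym Hacyc (tle_trans h1 hb) (par_tle (proj1 (Hyv i'))).
      by move: (proj1 (Hyv i')); rewrite -ex => /(noself Hacyc).
    * move=> /eqP -> /eqP /binj ee; move: Hne; by rewrite ee eqxx.
  + case=> [i|j] u v.
    * rewrite !inE => hu hv.
      apply: connect_trans (sub_conn Hsym Hfe hu) _.
      by rewrite symI; apply: (sub_conn Hsym Hfe hv).
    * by rewrite !inE => /eqP -> /eqP ->; apply: connect0.
  + case=> [i|j] [i'|j'] //= _.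
    * have : bv j' \in BF e par (yv i) by rewrite (proj2 (Hyv i)) inE bB.
      rewrite inE => /andP [_ /existsP [u /andP [hu he]]].
      by exists u, (bv j'); rewrite !inE hu eqxx he.
    * have : bv j \in BF e par (yv i') by rewrite (proj2 (Hyv i')) inE bB.
      rewrite inE => /andP [_ /existsP [u /andP [hu he]]].
      by exists (bv j), u; rewrite !inE hu eqxx Hsym he.
- move=> HBp Hsep; apply: leq_trans Hsep.
  set S := B :|: [set x].
  have HS : #|S| <= p.
    have := (leq_card_setU B [set x]).1; rewrite cards1 addn1 => h.
    exact: leq_trans h HBp.
  apply: leq_trans (leq_bigmax_cond S HS).
  rewrite /ncomp_minus.
  set Ys := [set y | _].
  set r := root (induced e (~: S)).
  have Yp : forall y, y \in Ys -> par y = Some x /\ BF e par y = S.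
    by move=> y; rewrite inE => /andP [/eqP -> /eqP ->].
  have YnS : forall y, y \in Ys -> y \in ~: S.
    move=> y /Yp [hp _]; rewrite !inE negb_or; apply/andP; split.
      apply/negP => /Bx [hb _].
      have ex := tle_antisym Hacyc hb (par_tle hp).
      by move: hp; rewrite ex => /(noself Hacyc).
    apply/negP => /eqP ex; subst y; exact: (noself Hacyc hp).
  have inv : forall (A : {set T}) u v, u \in A -> connect (induced e A) u v -> v \in A.
    move=> A u v hu; apply: (connect_inv (P := fun w => w \in A)) => //.
    by move=> a b _; rewrite /induced /= => /and3P [].
  rewrite -(@card_in_imset _ _ r Ys).
    apply: subset_leq_card; apply/subsetP => _ /imsetP [y hy ->].
    rewrite inE /=; apply/andP; split; first exact: roots_root.
    rewrite !inE; have := inv _ _ _ (YnS _ hy) (connect_root _ y).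
    by rewrite !inE.
  move=> y1 y2 h1 h2 /(rootP (symI _)) hc.
  have [hp1 hB1] := Yp _ h1; have [hp2 _] := Yp _ h2.
  apply: (sib Hacyc hp1 hp2).
  apply: (connect_inv (P := fun w => tle par y1 w)) hc => //; last exact: tle_refl.
  move=> a b hya; rewrite /induced /= => /and3P [eab _ hb].
  case/orP: (Hnorm _ _ eab) => hab; first exact: tle_trans hya hab.
  case: (chain hya hab) => hc'; last exact: hc'.
  case: (eqVneq b y1) => [->|nb]; first exact: tle_refl.
  have : b \in BF e par y1.
    rewrite inE /tlt /tle nb hc' /=; apply/existsP; exists a; by apply/andP; split.
  by rewrite hB1; move: hb; rewrite inE => /negbTE ->.
Qed.
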